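(* Let $F=C^\infty(]0,1[,\mathbb{R})$ with the Fr\'echet topology given by the seminorms $\|f\|_{n,k}=\sup_{\frac{1}{n+1}\le x\le\frac{n}{n+1}}|f^{(k)}(x)|$, $(n,k)\in\mathbb{N}^*\times\mathbb{N}$. Let $\mathcal{A}=\{f\in C^\infty(]0,1[,]0,1[)\mid \lim_{x\to1}f(x)=1,\ \lim_{x\to0}f(x)=0\}$ and $\mathcal{D}=\{f\in\mathcal{A}\mid \inf_{x\in]0,1[}f'(x)>0 \text{ and } \sup_{x\in]0,1[}f'(x)>0\}$, with the topology induced by $F$. Then $\mathcal{D}$ is contractible. *)

(* Defs.v *)
From Stdlib Require Import Reals.
From Coquelicot Require Import Coquelicot.
Open Scope R_scope.

(* Elements of F = C^oo(]0,1[,R) are represented by functions R -> R whose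
   values outside ]0,1[ are irrelevant (all notions below only look at ]0,1[). *)
Definition smooth01 (f : R -> R) : Prop :=
  forall (k : nat) (x : R), 0 < x < 1 -> ex_derive_n f k x.

Definition seminorm (n k : nat) (f : R -> R) : Rbar :=
  Lub_Rbar (fun y => exists x, / INR (n + 1) <= x <= INR n / INR (n + 1)
                               /\ y = Rabs (Derive_n f k x)).

Definition in_A (f : R -> R) : Prop :=
  smooth01 f /\
  (forall x, 0 < x < 1 -> 0 < f x < 1) /\
  filterlim f (at_left 1) (locally 1) /\
  filterlim f (at_right 0) (locally 0).

Definition in_D (f : R -> R) : Prop :=
  in_A f /\
  Rbar_lt 0 (Glb_Rbar (fun y => exists x, 0 < x < 1 /\ y = Derive f x)) /\
  Rbar_lt 0 (Lub_Rbar (fun y => exists x, 0 < x < 1 /\ y = Derive f x)).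

(* Basic neighbourhood of f in the Frechet topology:
   { g | forall k <= K, ||g - f||_{N,k} < d } *)
Definition fnear (N K : nat) (d : R) (f g : R -> R) : Prop :=
  forall k : nat, (k <= K)%nat -> Rbar_lt (seminorm N k (fun x => g x - f x)) d.

(* Continuity of H : D x [0,1] -> D for the product of the induced
   Frechet topology on D and the usual topology on [0,1]. *)
Definition homotopy_continuous (H : (R -> R) -> R -> (R -> R)) : Prop :=
  forall (f : R -> R) (t : R), in_D f -> 0 <= t <= 1 ->
  forall (N K : nat) (eps : R), (1 <= N)%nat -> 0 < eps ->
  exists (N' K' : nat) (delta : R), (1 <= N')%nat /\ 0 < delta /\
    forall (g : R -> R) (s : R), in_D g -> 0 <= s <= 1 ->
      Rabs (s - t) < delta -> fnear N' K' delta f g ->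
      fnear N K eps (H f t) (H g s).

(* D is contractible: there is a continuous H : D x [0,1] -> D with
   H(.,0) = id and H(.,1) constant (equalities as elements of F, i.e. on ]0,1[). *)
Definition D_contractible : Prop :=
  exists (H : (R -> R) -> R -> (R -> R)) (c : R -> R),
    in_D c /\
    (forall f t, in_D f -> 0 <= t <= 1 -> in_D (H f t)) /\
    (forall f x, in_D f -> 0 < x < 1 -> H f 0 x = f x) /\
    (forall f x, in_D f -> 0 < x < 1 -> H f 1 x = c x) /\
    homotopy_continuous H.

(* Main.v *)
Require Import Defs.
From Stdlib Require Import Reals Lra Lia.
From Coquelicot Require Import Coquelicot.
Open Scope R_scope.

Definition Hh (f : R -> R) (t : R) : R -> R := fun x => (1 - t) * f x + t * x.

Lemma loc01 x : 0 < x < 1 -> locally x (fun y => 0 < y < 1).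
Proof.
  intros Hx. apply (locally_interval _ x (Finite 0) (Finite 1)); simpl; intros; lra.
Qed.

Lemma exd_id k x : ex_derive_n (fun y => y) k x.
Proof.
  apply (ex_derive_n_ext (fun y => y ^ 1)). intros; simpl; ring.
  apply ex_derive_n_pow.
Qed.

Lemma smooth_loc f n x : smooth01 f -> 0 < x < 1 ->
  locally x (fun y => forall k, (k <= n)%nat -> ex_derive_n f k y).
Proof.
  intros Hf Hx. apply (filter_imp (fun y => 0 < y < 1)); [|now apply loc01].
  intros y Hy k _. now apply Hf.
Qed.

Lemma loc_all f n x : (forall k y, ex_derive_n f k y) ->
  locally x (fun y => forall k, (k <= n)%nat -> ex_derive_n f k y).
Proof.
  intros Hf. apply filter_forall. intros; apply Hf.
Qed.

Lemma smooth_H f t : smooth01 f -> smooth01 (Hh f t).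
Proof.
  intros Hf k x Hx. unfold Hh.
  apply ex_derive_n_plus.
  - apply (filter_imp (fun y => 0 < y < 1)); [|now apply loc01].
    intros y Hy j _. apply ex_derive_n_scal_l. now apply Hf.
  - apply filter_forall. intros y j _. apply ex_derive_n_scal_l, exd_id.
Qed.

Lemma smooth_h f : smooth01 f -> smooth01 (fun x => x - f x).
Proof.
  intros Hf k x Hx. apply ex_derive_n_minus.
  - apply loc_all, exd_id.
  - now apply smooth_loc.
Qed.

Lemma interval_N N : (1 <= N)%nat ->
  0 < / INR (N + 1) /\ / INR (N + 1) <= INR N / INR (N + 1) /\ INR N / INR (N + 1) < 1.
Proof.
  intros HN. rewrite plus_INR. simpl (INR 1).
  assert (H1 : 1 <= INR N) by (apply (le_INR 1); lia).
  assert (Hi : 0 < / (INR N + 1)) by (apply Rinv_0_lt_compat; lra).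
  split; [exact Hi|]. split.
  - unfold Rdiv. rewrite <- (Rmult_1_l (/ (INR N + 1))) at 1.
    apply Rmult_le_compat_r; lra.
  - replace (INR N / (INR N + 1)) with (1 - / (INR N + 1)) by (field; lra). lra.
Qed.

Lemma seminorm_le N k u c :
  (forall x, / INR (N + 1) <= x <= INR N / INR (N + 1) -> Rabs (Derive_n u k x) <= c) ->
  Rbar_le (seminorm N k u) c.
Proof.
  intros H. unfold seminorm. destruct (Lub_Rbar_correct
    (fun y => exists x, / INR (N + 1) <= x <= INR N / INR (N + 1)
                               /\ y = Rabs (Derive_n u k x))) as [_ Hl].
  apply Hl. intros y [x [Hx ->]]. simpl. now apply H.
Qed.

Lemma seminorm_lt N k u (d : R) : Rbar_lt (seminorm N k u) d ->
  exists r, r < d /\ forall x, / INR (N + 1) <= x <= INR N / INR (N + 1) ->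
    Rabs (Derive_n u k x) <= r.
Proof.
  unfold seminorm. intros Hd.
  destruct (Lub_Rbar_correct
    (fun y => exists x, / INR (N + 1) <= x <= INR N / INR (N + 1)
                               /\ y = Rabs (Derive_n u k x))) as [Hu _].
  set (L := Lub_Rbar _) in *. clearbody L.
  destruct L as [l| |]; simpl in Hd.
  - exists l; split; [exact Hd|]. intros x Hx. exact (Hu _ (ex_intro _ x (conj Hx eq_refl))).
  - contradiction.
  - exists (d - 1); split; [lra|]. intros x Hx.
    specialize (Hu _ (ex_intro _ x (conj Hx eq_refl))). contradiction.
Qed.

Lemma bound_k h N k : smooth01 h -> (1 <= N)%nat ->
  exists M, forall x, / INR (N + 1) <= x <= INR N / INR (N + 1) ->
    Rabs (Derive_n h k x) <= M.
Proof.
  intros Hh HN. destruct (interval_N N HN) as [H1 [H2 H3]].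
  destruct (continuity_ab_maj (fun x => Rabs (Derive_n h k x)) _ _ H2) as [Mx [HM _]].
  - intros c Hc. apply (continuity_pt_comp (Derive_n h k) Rabs).
    + apply continuity_pt_filterlim. apply (ex_derive_continuous (K:=R_AbsRing) (V:=R_NormedModule) (Derive_n h k)).
      apply (Hh (S k)). lra.
    + apply Rcontinuity_abs.
  - exists (Rabs (Derive_n h k Mx)). exact HM.
Qed.

Lemma bound_K h N K : smooth01 h -> (1 <= N)%nat ->
  exists M, 0 <= M /\ forall k x, (k <= K)%nat -> / INR (N + 1) <= x <= INR N / INR (N + 1) ->
    Rabs (Derive_n h k x) <= M.
Proof.
  intros Hh HN. induction K as [|K IH].
  - destruct (bound_k h N 0 Hh HN) as [M HM]. exists (Rmax M 0). split; [apply Rmax_r|].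
    intros k x Hk Hx. replace k with 0%nat by lia. eapply Rle_trans; [apply HM; auto|apply Rmax_l].
  - destruct IH as [M1 [HM0 HM1]]. destruct (bound_k h N (S K) Hh HN) as [M2 HM2].
    exists (Rmax M1 M2). split; [eapply Rle_trans; [apply HM0|apply Rmax_l]|].
    intros k x Hk Hx. destruct (Nat.eq_dec k (S K)) as [->|Hne].
    + eapply Rle_trans; [apply HM2; auto|apply Rmax_r].
    + eapply Rle_trans; [apply HM1; auto; lia|apply Rmax_l].
Qed.

Lemma glb_pos E : Rbar_lt 0 (Glb_Rbar E) -> exists c, 0 < c /\ forall y, E y -> c <= y.
Proof.
  intros Hd. destruct (Glb_Rbar_correct E) as [Hl _].
  set (L := Glb_Rbar E) in *. clearbody L.
  destruct L as [l| |]; simpl in Hd.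
  - exists l; split; [exact Hd|]. intros y Hy. exact (Hl _ Hy).
  - exists 1; split; [lra|]. intros y Hy. specialize (Hl _ Hy). contradiction.
  - contradiction.
Qed.

Lemma glb_ge E (c : R) : (forall y, E y -> c <= y) -> Rbar_le c (Glb_Rbar E).
Proof.
  intros H. destruct (Glb_Rbar_correct E) as [_ Hl]. apply Hl. intros y Hy. exact (H y Hy).
Qed.

Lemma lub_ge E (y : R) : E y -> Rbar_le y (Lub_Rbar E).
Proof.
  intros H. destruct (Lub_Rbar_correct E) as [Hl _]. exact (Hl y H).
Qed.

Lemma lim_left_id : filterlim (fun x : R => x) (at_left 1) (locally 1).
Proof.
  apply (filterlim_filter_le_1 (F := locally 1)); [apply filter_le_within|apply filterlim_id].
Qed.

Lemma lim_right_id : filterlim (fun x : R => x) (at_right 0) (locally 0).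
Proof.
  apply (filterlim_filter_le_1 (F := locally 0)); [apply filter_le_within|apply filterlim_id].
Qed.

Lemma lim_H f t F (a : R) {FF : Filter F} :
  filterlim f F (locally a) -> filterlim (fun x : R => x) F (locally a) ->
  filterlim (Hh f t) F (locally a).
Proof.
  intros Hf Hi. unfold Hh.
  apply (filterlim_comp_2 (G := locally ((1 - t) * a)) (H := locally (t * a)) (fun x => (1 - t) * f x) (fun x => t * x) Rplus).
  - apply (filterlim_comp _ _ _ f (fun z => (1 - t) * z) F (locally a)); [exact Hf|].
    exact (filterlim_scal_r (K:=R_AbsRing) (V:=R_NormedModule) (1 - t) a).
  - apply (filterlim_comp _ _ _ (fun x => x) (fun z => t * z) F (locally a)); [exact Hi|].
    exact (filterlim_scal_r (K:=R_AbsRing) (V:=R_NormedModule) t a).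
  - pose proof (filterlim_plus (V:=R_NormedModule) ((1 - t) * a) (t * a)) as HP.
    assert (E : plus ((1 - t) * a) (t * a) = a).
    { change ((1 - t) * a + t * a = a). ring. }
    intros P HPa. apply HP. simpl. unfold plus; simpl. replace (Rplus ((1 - t) * a) (t * a)) with a by ring. exact HPa.
Qed.

Lemma Derive_H f t x : smooth01 f -> 0 < x < 1 -> Derive (Hh f t) x = (1 - t) * Derive f x + t.
Proof.
  intros Hf Hx. apply is_derive_unique. unfold Hh.
  assert (Hd : ex_derive f x) by exact (Hf 1%nat x Hx).
  auto_derive; [exact Hd|]. rewrite Rmult_1_l, Rmult_1_r. reflexivity.
Qed.

Lemma inD_H f t : in_D f -> 0 <= t <= 1 -> in_D (Hh f t).
Proof.
  intros [[Hs [Hv [Hl Hr]]] [Hg Hu]] Ht.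
  destruct (glb_pos _ Hg) as [c [Hc Hcy]].
  set (m := Rmin c 1).
  assert (Hm1 : m <= c) by apply Rmin_l. assert (Hm2 : m <= 1) by apply Rmin_r.
  assert (Hm0 : 0 < m) by (apply Rmin_glb_lt; lra).
  assert (HD : forall x, 0 < x < 1 -> m <= Derive (Hh f t) x).
  { intros x Hx. rewrite Derive_H by auto.
    assert (c <= Derive f x) by (apply Hcy; exists x; split; auto). nra. }
  split; [split; [|split; [|split]]|split].
  - now apply smooth_H.
  - intros x Hx. specialize (Hv x Hx). unfold Hh.
    assert (0 <= t * x) by (apply Rmult_le_pos; lra).
    assert (0 <= (1 - t) * f x) by (apply Rmult_le_pos; lra).
    assert (0 <= t * (1 - x)) by (apply Rmult_le_pos; lra).
    assert (0 <= (1 - t) * (1 - f x)) by (apply Rmult_le_pos; lra).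
    destruct (Rle_lt_dec t (1/2)).
    + assert (0 < (1 - t) * f x) by (apply Rmult_lt_0_compat; lra).
      assert (0 < (1 - t) * (1 - f x)) by (apply Rmult_lt_0_compat; lra). nra.
    + assert (0 < t * x) by (apply Rmult_lt_0_compat; lra).
      assert (0 < t * (1 - x)) by (apply Rmult_lt_0_compat; lra). nra.
  - exact (lim_H f t _ 1 Hl lim_left_id).
  - exact (lim_H f t _ 0 Hr lim_right_id).
  - apply (Rbar_lt_le_trans _ m); [exact Hm0|]. apply glb_ge.
    intros y [x [Hx ->]]. now apply HD.
  - apply (Rbar_lt_le_trans _ (Derive (Hh f t) (1/2))).
    + simpl. assert (m <= Derive (Hh f t) (1/2)) by (apply HD; lra). lra.
    + apply lub_ge. exists (1/2); split; [lra|auto].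
Qed.

Lemma inD_id : in_D (fun x => x).
Proof.
  assert (HD : forall x, Derive (fun x => x) x = 1).
  { intros x. apply is_derive_unique. auto_derive; auto. }
  split; [split; [|split; [|split]]|split].
  - intros k x _; apply exd_id.
  - auto.
  - exact lim_left_id.
  - exact lim_right_id.
  - apply (Rbar_lt_le_trans _ 1); [simpl; lra|]. apply glb_ge.
    intros y [x [Hx ->]]. rewrite HD. lra.
  - apply (Rbar_lt_le_trans _ (Derive (fun x => x) (1/2))); [rewrite HD; simpl; lra|].
    apply lub_ge. exists (1/2); split; [lra|auto].
Qed.

Theorem proposition8p1 : D_contractible.
Proof.
  exists Hh, (fun x => x). split; [exact inD_id|]. split; [exact inD_H|].
  split; [intros f x _ _; unfold Hh; ring|].
  split; [intros f x _ _; unfold Hh; ring|].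
  intros f t Hf Ht N K eps HN Heps.
  assert (Hsf : smooth01 f) by apply Hf.
  destruct (bound_K (fun x => x - f x) N K (smooth_h f Hsf) HN) as [M [HM0 HM]].
  set (delta := eps / (M + 2)).
  assert (Hdel : 0 < delta) by (unfold delta; apply Rdiv_lt_0_compat; lra).
  assert (Hdel2 : delta * (M + 2) = eps) by (unfold delta; field; lra).
  exists N, K, delta. split; [exact HN|]. split; [exact Hdel|].
  intros g s Hg Hs Hst Hnear k Hk.
  assert (Hsg : smooth01 g) by apply Hg.
  destruct (seminorm_lt N k _ delta (Hnear k Hk)) as [r [Hr Hb]].
  apply (Rbar_le_lt_trans _ (r + delta * M)).
  2:{ simpl. nra. }
  apply seminorm_le. intros x Hx.
  destruct (interval_N N HN) as [I1 [I2 I3]].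
  assert (Hx01 : 0 < x < 1) by lra.
  rewrite (Derive_n_ext _ (fun y => (1 - s) * (g y - f y) + (s - t) * (y - f y)))
    by (intros; unfold Hh; ring).
  assert (L1 : locally x (fun y => forall j, (j <= k)%nat ->
      ex_derive_n (fun y => (1 - s) * (g y - f y)) j y)).
  { apply (filter_imp (fun y => 0 < y < 1)); [|now apply loc01].
    intros y Hy j _. apply ex_derive_n_scal_l. apply ex_derive_n_minus; now apply smooth_loc. }
  assert (L2 : locally x (fun y => forall j, (j <= k)%nat ->
      ex_derive_n (fun y => (s - t) * (y - f y)) j y)).
  { apply (filter_imp (fun y => 0 < y < 1)); [|now apply loc01].
    intros y Hy j _. apply ex_derive_n_scal_l. now apply smooth_h. }
  pose proof (Derive_n_plus _ _ k x L1 L2) as E. cbv beta in E. rewrite E.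
  rewrite !Derive_n_scal_l.
  set (a := Derive_n (fun y => g y - f y) k x).
  set (b := Derive_n (fun y => y - f y) k x).
  assert (Ha : Rabs a <= r) by (apply Hb; exact Hx).
  assert (Hbb : Rabs b <= M) by (apply HM; auto).
  eapply Rle_trans; [apply Rabs_triang|]. rewrite !Rabs_mult.
  assert (Rabs (1 - s) <= 1) by (rewrite Rabs_pos_eq; lra).
  assert (Rabs (1 - s) * Rabs a <= Rabs a).
  { rewrite <- (Rmult_1_l (Rabs a)) at 2. apply Rmult_le_compat_r; [apply Rabs_pos|auto]. }
  assert (Rabs (s - t) * Rabs b <= delta * M).
  { apply Rmult_le_compat; try apply Rabs_pos; lra. }
  lra.
Qed.
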